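(* For all real $\alpha,\beta$ with $\beta\neq0$, every integer $n\ge0$ and every real $x>0$, \[ P_n^{(\alpha,\beta)}(x^{\beta})=(-1)^n x^{n-\alpha}e^{-x^{\beta}}\Big(\frac{d}{dx}\Big)^n\big(x^{\alpha}e^{x^{\beta}}\big), \qquad P_n^{(\alpha,\beta)}(x^{-\beta})=x^{\alpha+1}e^{-x^{-\beta}}\Big(\frac{d}{dx}\Big)^n\big(x^{n-1-\alpha}e^{x^{-\beta}}\big). \]
   Context: For real $\alpha,\beta$ with $\beta\neq0$, the polynomials $P_n^{(\alpha,\beta)}(x)$, $n\ge0$, are defined by $\sum_{n\ge0}P_n^{(\alpha,\beta)}(x)\frac{t^n}{n!}=(1-t)^{\alpha}\exp\big(x((1-t)^{\beta}-1)\big)$ (formal power series in $t$). Real powers $x^{\gamma}$ of $x>0$ are the usual positive real powers. *)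

(* Defs.v *)
From Stdlib Require Import Reals Factorial.
Open Scope R_scope.

(** Formal power series in t with real coefficients: [nat -> R],
    the n-th entry being the coefficient of t^n. *)
Definition fps := nat -> R.

Definition fps_mul (a b : fps) : fps :=
  fun n => sum_f_R0 (fun k => a k * b (n - k)%nat) n.

Definition fps_one : fps := fun n => match n with O => 1 | _ => 0 end.

Fixpoint fps_pow (a : fps) (j : nat) : fps :=
  match j with O => fps_one | S j => fps_mul a (fps_pow a j) end.

Definition fps_scale (c : R) (a : fps) : fps := fun n => c * a n.

(** exp(h) for a formal series h with zero constant term:
    exp(h) = sum_j h^j / j!, and h^j has no t^n term for j > n,
    so the coefficient of t^n is the finite sum over j <= n. *)
Definition fps_exp (h : fps) : fps :=
  fun n => sum_f_R0 (fun j => fps_pow h j n / INR (fact j)) n.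

Fixpoint falling (a : R) (k : nat) : R :=
  match k with O => 1 | S k => falling a k * (a - INR k) end.

Definition gbinom (a : R) (k : nat) : R := falling a k / INR (fact k).

Definition fps_one_minus_t_pow (a : R) : fps :=
  fun k => (-1) ^ k * gbinom a k.

Definition fps_one_minus_t_pow_minus1 (b : R) : fps :=
  fun k => match k with O => 0 | _ => fps_one_minus_t_pow b k end.

Definition P (alpha beta : R) (n : nat) (x : R) : R :=
  INR (fact n) *
  fps_mul (fps_one_minus_t_pow alpha)
          (fps_exp (fps_scale x (fps_one_minus_t_pow_minus1 beta))) n.

Inductive nth_deriv_pos : nat -> (R -> R) -> (R -> R) -> Prop :=
| nth_deriv_pos_O : forall f, nth_deriv_pos O f f
| nth_deriv_pos_S : forall n f g h,
    nth_deriv_pos n f g ->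
    (forall x, 0 < x -> derivable_pt_lim g x (h x)) ->
    nth_deriv_pos (S n) f h.

(* Main.v *)
Require Import Defs.
From Stdlib Require Import Reals Factorial Lia Lra FunctionalExtensionality.
Open Scope R_scope.

Lemma sum_rev (f : nat -> R) n :
  sum_f_R0 f n = sum_f_R0 (fun k => f (n - k)%nat) n.
Proof.
  induction n as [|n IH].
  - simpl. reflexivity.
  - rewrite (decomp_sum (fun k => f (S n - k)%nat)) by lia. simpl pred.
    rewrite tech5, IH. rewrite Nat.sub_0_r. 
    replace (sum_f_R0 (fun i => f (S n - S i)%nat) n) with
      (sum_f_R0 (fun k => f (n - k)%nat) n) by (apply sum_eq; intros; f_equal).
    ring.
Qed.

Lemma sum_tri (f : nat -> nat -> R) n :
  sum_f_R0 (fun m => sum_f_R0 (fun k => f k (m - k)%nat) m) n =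
  sum_f_R0 (fun k => sum_f_R0 (fun j => f k j) (n - k)) n.
Proof.
  induction n as [|n IH].
  - simpl. reflexivity.
  - rewrite tech5, IH, (tech5 (fun k => sum_f_R0 (fun j => f k j) (S n - k)) n).
    replace (S n - S n)%nat with 0%nat by lia.
    replace (sum_f_R0 (fun k => sum_f_R0 (fun j => f k j) (S n - k)) n) with
      (sum_f_R0 (fun k => sum_f_R0 (fun j => f k j) (n - k) + f k (S n - k)%nat) n).
    2:{ apply sum_eq; intros i Hi. replace (S n - i)%nat with (S (n - i)) by lia.
        rewrite tech5. reflexivity. }
    rewrite sum_plus. simpl (sum_f_R0 (fun j => f (S n) j) 0). rewrite (tech5 (fun k => f k (S n - k)%nat)). replace (S n - S n)%nat with 0%nat by lia. ring.
Qed.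

Lemma sum_rect (f : nat -> nat -> R) n m :
  sum_f_R0 (fun i => sum_f_R0 (fun j => f i j) m) n =
  sum_f_R0 (fun j => sum_f_R0 (fun i => f i j) n) m.
Proof.
  induction n as [|n IH].
  - simpl. reflexivity.
  - rewrite tech5, IH. rewrite <- sum_plus. apply sum_eq; intros. rewrite tech5. reflexivity.
Qed.

Lemma sum_zero (f : nat -> R) n : (forall i, (i <= n)%nat -> f i = 0) -> sum_f_R0 f n = 0.
Proof.
  intros H. induction n. simpl; apply H; lia. rewrite tech5, IHn, H; try lia; intros; try ring.
  apply H; lia.
Qed.

Lemma M_comm a b : fps_mul a b = fps_mul b a.
Proof.
  extensionality n. unfold fps_mul. rewrite sum_rev. apply sum_eq; intros.
  replace (n - (n - i))%nat with i by lia. ring.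
Qed.

Lemma M_assoc a b c : fps_mul a (fps_mul b c) = fps_mul (fps_mul a b) c.
Proof.
  extensionality n. unfold fps_mul.
  transitivity (sum_f_R0 (fun m => sum_f_R0 (fun k => (fun k j => a k * b j * c (n - k - j)%nat) k (m - k)%nat) m) n).
  2:{ apply sum_eq; intros m Hm. rewrite <- (Rmult_comm (c (n - m)%nat)), scal_sum. apply sum_eq; intros k Hk.
      replace (n - k - (m - k))%nat with (n - m)%nat by lia. ring. }
  etransitivity; [| exact (eq_sym (sum_tri (fun k j => a k * b j * c (n - k - j)%nat) n))].
  apply sum_eq; intros k Hk. rewrite scal_sum. apply sum_eq; intros. ring.
Qed.

Definition fps_add (a b : fps) : fps := fun n => a n + b n.
Definition fps_D (a : fps) : fps := fun n => INR (S n) * a (S n).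
Definition fps_sh (a : fps) : fps := fun n => match n with O => 0 | S m => a m end.
Definition fps_om (a : fps) : fps := fun n => a n - fps_sh a n.
Definition fps_zero : fps := fun _ => 0.

Lemma M_addl a b c : fps_mul (fps_add a b) c = fps_add (fps_mul a c) (fps_mul b c).
Proof. extensionality n; unfold fps_mul, fps_add. rewrite <- sum_plus. apply sum_eq; intros; ring. Qed.
Lemma M_addr a b c : fps_mul c (fps_add a b) = fps_add (fps_mul c a) (fps_mul c b).
Proof. extensionality n; unfold fps_mul, fps_add. rewrite <- sum_plus. apply sum_eq; intros; ring. Qed.
Lemma M_scalel s a b : fps_mul (fps_scale s a) b = fps_scale s (fps_mul a b).
Proof. extensionality n; unfold fps_mul, fps_scale. rewrite scal_sum. apply sum_eq; intros; ring. Qed.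
Lemma M_scaler s a b : fps_mul a (fps_scale s b) = fps_scale s (fps_mul a b).
Proof. extensionality n; unfold fps_mul, fps_scale. rewrite scal_sum. apply sum_eq; intros; ring. Qed.
Lemma M_zero a : fps_mul a fps_zero = fps_zero.
Proof. extensionality n; unfold fps_mul, fps_zero. apply sum_zero; intros; ring. Qed.
Lemma M_one a : fps_mul a fps_one = a.
Proof.
  extensionality n; unfold fps_mul. destruct n. simpl. ring.
  rewrite tech5. rewrite sum_zero. replace (S n - S n)%nat with 0%nat by lia. simpl; ring.
  intros i Hi. replace (S n - i)%nat with (S (n - i)) by lia. simpl; ring.
Qed.
Lemma M_shl a b : fps_mul (fps_sh a) b = fps_sh (fps_mul a b).
Proof.
  extensionality n; unfold fps_mul, fps_sh. destruct n. simpl; ring.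
  rewrite decomp_sum by lia. simpl pred. rewrite Rmult_0_l, Rplus_0_l. apply sum_eq; intros. reflexivity.
Qed.
Lemma M_oml a b : fps_mul (fps_om a) b = fps_om (fps_mul a b).
Proof.
  extensionality n. unfold fps_om. rewrite <- M_shl. unfold fps_mul. rewrite <- minus_sum.
  apply sum_eq; intros; ring.
Qed.
Lemma M_omr a b : fps_mul a (fps_om b) = fps_om (fps_mul a b).
Proof. rewrite M_comm, M_oml, M_comm. reflexivity. Qed.

Lemma D_mul a b : fps_D (fps_mul a b) = fps_add (fps_mul (fps_D a) b) (fps_mul a (fps_D b)).
Proof.
  extensionality n. unfold fps_D, fps_add, fps_mul.
  transitivity (sum_f_R0 (fun k => INR k * a k * b (S n - k)%nat) (S n) +
                sum_f_R0 (fun k => a k * (INR (S n - k) * b (S n - k)%nat)) (S n)).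
  { rewrite <- sum_plus, scal_sum. apply sum_eq; intros i Hi. rewrite minus_INR by lia. ring. }
  f_equal.
  - rewrite decomp_sum by lia. simpl pred. simpl INR at 1. rewrite Rmult_0_l, Rmult_0_l, Rplus_0_l.
    apply sum_eq; intros; reflexivity.
  - rewrite tech5. replace (S n - S n)%nat with 0%nat by lia. simpl INR at 2. 
    rewrite Rmult_0_l, Rmult_0_r, Rplus_0_r. apply sum_eq; intros i Hi.
    replace (S n - i)%nat with (S (n - i)) by lia. reflexivity.
Qed.

Lemma falling_pascal a k : falling (a + 1) (S k) = falling a (S k) + INR (S k) * falling a k.
Proof.
  induction k as [|k IH].
  - simpl. ring.
  - change (falling (a+1) (S (S k))) with (falling (a+1) (S k) * (a + 1 - INR (S k))).
    rewrite IH. change (falling a (S (S k))) with (falling a (S k) * (a - INR (S k))).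
    change (falling a (S k)) with (falling a k * (a - INR k)).
    rewrite !S_INR. ring.
Qed.

Lemma fact_S_INR m : INR (fact (S m)) = INR (S m) * INR (fact m).
Proof. rewrite fact_simpl, mult_INR. reflexivity. Qed.

Lemma A_pascal a : fps_one_minus_t_pow (a + 1) = fps_om (fps_one_minus_t_pow a).
Proof.
  extensionality k. unfold fps_om, fps_sh, fps_one_minus_t_pow, gbinom. destruct k as [|m].
  - simpl. ring.
  - rewrite falling_pascal, fact_S_INR. simpl pow.
    assert (INR (fact m) <> 0) by apply INR_fact_neq_0.
    assert (INR (S m) <> 0) by (apply not_0_INR; lia).
    field. auto.
Qed.

Lemma A_D a n : fps_D (fps_one_minus_t_pow a) n = (INR n - a) * fps_one_minus_t_pow a n.
Proof.
  unfold fps_D, fps_one_minus_t_pow, gbinom. rewrite fact_S_INR.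
  change (falling a (S n)) with (falling a n * (a - INR n)). simpl pow.
  assert (INR (fact n) <> 0) by apply INR_fact_neq_0.
  assert (INR (S n) <> 0) by (apply not_0_INR; lia).
  field. auto.
Qed.

Lemma A_ode a : fps_om (fps_D (fps_one_minus_t_pow a)) = fps_scale (-a) (fps_one_minus_t_pow a).
Proof.
  extensionality n. unfold fps_om, fps_sh, fps_scale. rewrite A_D. destruct n as [|m].
  - simpl. ring.
  - unfold fps_D. rewrite S_INR. ring.
Qed.

Lemma H_A b : fps_add (fps_one_minus_t_pow_minus1 b) fps_one = fps_one_minus_t_pow b.
Proof.
  extensionality k. unfold fps_add, fps_one_minus_t_pow_minus1, fps_one. destruct k.
  - unfold fps_one_minus_t_pow, gbinom. simpl. field.
  - ring.
Qed.

Lemma D_H b : fps_D (fps_one_minus_t_pow_minus1 b) = fps_D (fps_one_minus_t_pow b).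
Proof. extensionality n. reflexivity. Qed.

Lemma pow_low h : h 0%nat = 0 -> forall j m, (m < j)%nat -> fps_pow h j m = 0.
Proof.
  intros H0 j. induction j as [|j IH]; intros m Hm.
  - lia.
  - simpl. unfold fps_mul. apply sum_zero. intros i Hi. destruct i.
    + rewrite H0. ring.
    + rewrite IH by lia. ring.
Qed.

Lemma D_one : fps_D fps_one = fps_zero.
Proof. extensionality n. unfold fps_D, fps_one, fps_zero. ring. Qed.

Lemma D_pow h j : fps_D (fps_pow h (S j)) = fps_scale (INR (S j)) (fps_mul (fps_D h) (fps_pow h j)).
Proof.
  induction j as [|j IH].
  - simpl fps_pow. rewrite D_mul, D_one, M_zero. extensionality n.
    unfold fps_add, fps_scale, fps_zero. simpl INR. ring.
  - change (fps_pow h (S (S j))) with (fps_mul h (fps_pow h (S j))).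
    rewrite D_mul, IH, M_scaler, M_assoc, (M_comm h (fps_D h)), <- M_assoc.
    change (fps_mul h (fps_pow h j)) with (fps_pow h (S j)).
    extensionality n. unfold fps_add, fps_scale. rewrite (S_INR (S j)). ring.
Qed.

Lemma exp_trunc h n N : h 0%nat = 0 -> (n <= N)%nat ->
  fps_exp h n = sum_f_R0 (fun j => fps_pow h j n / INR (fact j)) N.
Proof.
  intros H0 HN. unfold fps_exp. induction HN as [|N HN IH].
  - reflexivity.
  - rewrite tech5, <- IH. rewrite (pow_low h H0 (S N) n) by lia. unfold Rdiv. ring.
Qed.

Lemma D_exp h : h 0%nat = 0 -> fps_D (fps_exp h) = fps_mul (fps_D h) (fps_exp h).
Proof.
  intros H0. extensionality n. unfold fps_D at 1. unfold fps_exp at 1.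
  rewrite scal_sum. rewrite decomp_sum by lia. simpl pred.
  replace (fps_pow h 0 (S n)) with 0 by reflexivity.
  transitivity (sum_f_R0 (fun j => fps_mul (fps_D h) (fps_pow h j) n / INR (fact j)) n).
  { rewrite Rdiv_0_l, Rmult_0_l, Rplus_0_l. apply sum_eq; intros j Hj.
    change (fps_pow h (S j) (S n) * INR (S n)) with (fps_pow h (S j) (S n) * INR (S n)).
    assert (E := f_equal (fun f => f n) (D_pow h j)). unfold fps_D, fps_scale in E. cbv beta in E.
    rewrite fact_S_INR.
    assert (INR (fact j) <> 0) by apply INR_fact_neq_0.
    assert (INR (S j) <> 0) by (apply not_0_INR; lia).
    transitivity ((INR (S n) * fps_pow h (S j) (S n)) / (INR (S j) * INR (fact j))).
    { unfold Rdiv. ring. }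
    rewrite E. unfold fps_D. field. split; auto. }
  unfold fps_mul at 1.
  transitivity (sum_f_R0 (fun j => sum_f_R0 (fun k => fps_D h k * (fps_pow h j (n - k)%nat / INR (fact j))) n) n).
  { apply sum_eq; intros j Hj. unfold Rdiv. rewrite (Rmult_comm (sum_f_R0 _ _)), scal_sum. apply sum_eq; intros; ring. }
  rewrite sum_rect. unfold fps_mul. apply sum_eq; intros k Hk.
  rewrite (exp_trunc h (n - k) n H0) by lia. rewrite scal_sum. apply sum_eq; intros; ring.
Qed.

Lemma pow_scale y h j : fps_pow (fps_scale y h) j = fps_scale (y ^ j) (fps_pow h j).
Proof.
  induction j as [|j IH].
  - extensionality n. unfold fps_scale. simpl. ring.
  - simpl fps_pow. rewrite IH, M_scalel, M_scaler. extensionality n. unfold fps_scale. simpl. ring.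
Qed.

Lemma d_sum (f f' : nat -> R -> R) n y :
  (forall j, derivable_pt_lim (f j) y (f' j y)) ->
  derivable_pt_lim (fun z => sum_f_R0 (fun j => f j z) n) y (sum_f_R0 (fun j => f' j y) n).
Proof.
  intros H. induction n as [|n IH].
  - simpl. exact (H 0%nat).
  - simpl. exact (derivable_pt_lim_plus (fun z => sum_f_R0 (fun j => f j z) n) (f (S n)) y _ _ IH (H (S n))).
Qed.

Lemma d_scal (f : R -> R) c y l : derivable_pt_lim f y l -> derivable_pt_lim (fun z => c * f z) y (c * l).
Proof. intros H. exact (derivable_pt_lim_scal f c y l H). Qed.

Definition Hs (b : R) : fps := fps_one_minus_t_pow_minus1 b.
Definition Ez (b z : R) : fps := fps_exp (fps_scale z (Hs b)).
Definition Gs (a b z : R) : fps := fps_mul (fps_one_minus_t_pow a) (Ez b z).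
Definition dP (a b : R) (n : nat) (z : R) : R :=
  INR (fact n) * fps_mul (fps_one_minus_t_pow a) (fps_mul (Hs b) (Ez b z)) n.

Lemma Hs0 b : Hs b 0%nat = 0.
Proof. reflexivity. Qed.
Lemma sHs0 z b : fps_scale z (Hs b) 0%nat = 0.
Proof. unfold fps_scale. rewrite Hs0. ring. Qed.

Lemma E_coef b z n : Ez b z n = sum_f_R0 (fun j => (fps_pow (Hs b) j n / INR (fact j)) * z ^ j) n.
Proof. unfold Ez, fps_exp. apply sum_eq; intros. rewrite pow_scale. unfold fps_scale. unfold Rdiv. ring. Qed.

Lemma dE b z n : derivable_pt_lim (fun z => Ez b z n) z (fps_mul (Hs b) (Ez b z) n).
Proof.
  replace (fun z => Ez b z n) with (fun z => sum_f_R0 (fun j => (fun j z => (fps_pow (Hs b) j n / INR (fact j)) * z ^ j) j z) n)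
    by (extensionality w; rewrite E_coef; reflexivity).
  match goal with |- derivable_pt_lim _ _ ?l => replace l with
    (sum_f_R0 (fun j => (fun j z => (fps_pow (Hs b) j n / INR (fact j)) * (INR j * z ^ pred j)) j z) n) end.
  { apply (d_sum (fun j z => (fps_pow (Hs b) j n / INR (fact j)) * z ^ j)
       (fun j z => (fps_pow (Hs b) j n / INR (fact j)) * (INR j * z ^ pred j))).
    intros j. apply d_scal. apply derivable_pt_lim_pow. }
  unfold fps_mul.
  transitivity (sum_f_R0 (fun j => z ^ j / INR (fact j) * fps_mul (Hs b) (fps_pow (Hs b) j) n) n).
  2:{ unfold fps_mul.
      transitivity (sum_f_R0 (fun j => sum_f_R0 (fun k => Hs b k * (z ^ j * fps_pow (Hs b) j (n - k)%nat / INR (fact j))) n) n).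
      { apply sum_eq; intros j Hj. unfold Rdiv. rewrite scal_sum. apply sum_eq; intros; ring. }
      rewrite sum_rect. apply sum_eq; intros k Hk. unfold Ez.
      rewrite (exp_trunc _ (n - k) n (sHs0 z b)) by lia. rewrite scal_sum. apply sum_eq; intros j Hj.
      rewrite pow_scale. unfold fps_scale. unfold Rdiv. ring. }
  destruct n as [|m].
  - simpl. unfold fps_mul. simpl. reflexivity.
  - rewrite decomp_sum by lia. simpl pred. rewrite (tech5 _ m).
    assert (Z : fps_mul (Hs b) (fps_pow (Hs b) (S m)) (S m) = 0).
    { change (fps_pow (Hs b) (S (S m)) (S m) = 0). apply pow_low; [apply Hs0| lia]. }
    rewrite Z. simpl INR at 1. rewrite Rmult_0_l, Rmult_0_r, Rplus_0_l, Rmult_0_r, Rplus_0_r.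
    apply sum_eq; intros j Hj. rewrite fact_S_INR. simpl pred. simpl fps_pow.
    assert (INR (fact j) <> 0) by apply INR_fact_neq_0.
    assert (INR (S j) <> 0) by (apply not_0_INR; lia).
    field. split; auto.
Qed.

Lemma P_eq a b n z : P a b n z = INR (fact n) * Gs a b z n.
Proof. reflexivity. Qed.

Lemma dP_ok a b n z : derivable_pt_lim (P a b n) z (dP a b n z).
Proof.
  unfold P, dP. apply d_scal. unfold fps_mul at 1 3.
  apply (d_sum (fun k z => fps_one_minus_t_pow a k * Ez b z (n - k)%nat)
               (fun k z => fps_one_minus_t_pow a k * fps_mul (Hs b) (Ez b z) (n - k)%nat)).
  intros j. apply d_scal. apply dE.
Qed.

Lemma om_add x y : fps_om (fps_add x y) = fps_add (fps_om x) (fps_om y).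
Proof. extensionality n. unfold fps_om, fps_add, fps_sh. destruct n; ring. Qed.
Lemma om_scale s x : fps_om (fps_scale s x) = fps_scale s (fps_om x).
Proof. extensionality n. unfold fps_om, fps_scale, fps_sh. destruct n; ring. Qed.
Lemma D_scale s x : fps_D (fps_scale s x) = fps_scale s (fps_D x).
Proof. extensionality n. unfold fps_D, fps_scale. ring. Qed.
Lemma M_onel a : fps_mul fps_one a = a.
Proof. rewrite M_comm. apply M_one. Qed.

Lemma G_ode a b z :
  fps_om (fps_D (Gs a b z)) =
  fps_add (fps_scale (-a) (Gs a b z))
          (fps_scale (-b*z) (fps_add (fps_mul (fps_one_minus_t_pow a) (fps_mul (Hs b) (Ez b z))) (Gs a b z))).
Proof.
  unfold Gs. rewrite D_mul, om_add, <- M_oml, <- M_omr, A_ode. unfold Ez at 2.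
  rewrite D_exp by apply sHs0. rewrite <- M_oml, D_scale, om_scale. unfold Hs at 1. rewrite D_H, A_ode.
  fold (Ez b z). rewrite !M_scalel.
  rewrite <- (H_A b), M_addl, M_onel. fold (Hs b). rewrite !M_scaler, M_addr. extensionality n. unfold fps_add, fps_scale. ring.
Qed.

Lemma om_D_coef G n : fps_om (fps_D G) n = INR (S n) * G (S n) - INR n * G n.
Proof. unfold fps_om, fps_sh, fps_D. destruct n. simpl. ring. reflexivity. Qed.

Lemma R1 a b n z : P a b (S n) z = (INR n - a - b * z) * P a b n z - b * z * dP a b n z.
Proof.
  rewrite !P_eq. unfold dP.
  assert (E := f_equal (fun f => f n) (G_ode a b z)). cbv beta in E.
  rewrite om_D_coef in E. unfold fps_add, fps_scale in E.
  rewrite fact_S_INR.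
  replace (INR (S n) * INR (fact n) * Gs a b z (S n)) with (INR (fact n) * (INR (S n) * Gs a b z (S n))) by ring.
  replace (INR (S n) * Gs a b z (S n)) with
    (INR n * Gs a b z n + (- a * Gs a b z n + - b * z * (fps_mul (fps_one_minus_t_pow a) (fps_mul (Hs b) (Ez b z)) n + Gs a b z n))) by lra.
  ring.
Qed.

Lemma R2 a b n z : P (a + 1) b (S n) z = - (a + 1 + b * z) * P a b n z - b * z * dP a b n z.
Proof.
  assert (Gs (a + 1) b z = fps_om (Gs a b z)) as HG.
  { unfold Gs. rewrite A_pascal, M_oml. reflexivity. }
  transitivity (P a b (S n) z - INR (S n) * P a b n z).
  { rewrite !P_eq, HG. unfold fps_om, fps_sh. rewrite fact_S_INR. ring. }
  rewrite R1, S_INR. ring.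
Qed.

Lemma P0 a b z : P a b 0 z = 1.
Proof. unfold P, fps_mul, fps_exp, fps_one_minus_t_pow, gbinom. simpl. field. Qed.

Lemma dmul (f g : R -> R) x lf lg : derivable_pt_lim f x lf -> derivable_pt_lim g x lg ->
  derivable_pt_lim (fun y => f y * g y) x (lf * g x + f x * lg).
Proof. intros. exact (derivable_pt_lim_mult f g x lf lg H H0). Qed.

Lemma dcomp (f g : R -> R) x lf lg : derivable_pt_lim f x lf -> derivable_pt_lim g (f x) lg ->
  derivable_pt_lim (fun y => g (f y)) x (lg * lf).
Proof. intros. exact (derivable_pt_lim_comp f g x lf lg H H0). Qed.

Lemma dconst c x : derivable_pt_lim (fun _ => c) x 0.
Proof. exact (derivable_pt_lim_const c x). Qed.

Definition Fk (a b : R) (k : nat) (x : R) : R :=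
  (-1) ^ k * Rpower x (a - INR k) * exp (Rpower x b) * P a b k (Rpower x b).

Lemma F_deriv a b k x : 0 < x -> derivable_pt_lim (Fk a b k) x (Fk a b (S k) x).
Proof.
  intros Hx.
  set (y := Rpower x b).
  assert (dy := derivable_pt_lim_power x b Hx).
  assert (dpw := derivable_pt_lim_power x (a - INR k) Hx).
  assert (dex := dcomp _ exp x _ _ dy (derivable_pt_lim_exp (Rpower x b))).
  assert (dPy := dcomp _ (P a b k) x _ _ dy (dP_ok a b k (Rpower x b))).
  assert (d1 := dmul _ _ x _ _ (dconst ((-1)^k) x) dpw).
  assert (d2 := dmul _ _ x _ _ d1 dex).
  assert (d3 := dmul _ _ x _ _ d2 dPy).
  cbv beta in d3.
  match type of d3 with derivable_pt_lim _ _ ?l => replace (Fk a b (S k) x) with l end.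
  { exact d3. }
  fold y. unfold Fk. fold y.
  set (u := Rpower x (a - INR (S k))).
  assert (E1 : Rpower x (a - INR k) = u * x).
  { unfold u. rewrite <- (Rpower_1 x Hx) at 3. rewrite <- Rpower_plus. f_equal. rewrite S_INR. ring. }
  assert (E2 : Rpower x (a - INR k - 1) = u).
  { unfold u. f_equal. rewrite S_INR. ring. }
  assert (E3 : Rpower x (b - 1) = y / x).
  { unfold y. replace b with ((b - 1) + 1) at 2 by ring. rewrite Rpower_plus, Rpower_1 by exact Hx.
    field. lra. }
  rewrite E1, E2, E3, R1. simpl pow. field. lra.
Qed.

Lemma deriv_local f g x l : 0 < x -> (forall y, 0 < y -> f y = g y) ->
  derivable_pt_lim f x l -> derivable_pt_lim g x l.
Proof.
  intros Hx Heq Hd eps Heps. destruct (Hd eps Heps) as [d Hdd].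
  assert (Hm : 0 < Rmin d x) by (apply Rmin_pos; [apply cond_pos | exact Hx]).
  exists (mkposreal _ Hm). intros h Hh Hlt. simpl in Hlt.
  assert (Rabs h < d) by (eapply Rlt_le_trans; [exact Hlt| apply Rmin_l]).
  assert (Rabs h < x) by (eapply Rlt_le_trans; [exact Hlt| apply Rmin_r]).
  assert (- h <= Rabs h) by (rewrite <- Rabs_Ropp; apply Rle_abs).
  rewrite <- (Heq (x + h)) by lra. rewrite <- (Heq x) by lra. apply Hdd; auto.
Qed.

Lemma chain_unique (F : nat -> R -> R)
  (HF : forall k x, 0 < x -> derivable_pt_lim (F k) x (F (S k) x)) k f g : nth_deriv_pos k f g -> (forall x, 0 < x -> f x = F 0%nat x) ->
  forall x, 0 < x -> g x = F k x.
Proof.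
  intros Hd. induction Hd as [f|n f g h Hd IH Hh]; intros Hf x Hx.
  - auto.
  - apply (uniqueness_limite g x); [apply Hh; exact Hx|].
    apply (deriv_local (F n) g x); auto.
    intros y Hy. symmetry. apply IH; auto.
Qed.

Lemma chain_exists (F : nat -> R -> R)
  (HF : forall k x, 0 < x -> derivable_pt_lim (F k) x (F (S k) x)) f : (forall x, 0 < x -> f x = F 0%nat x) ->
  forall k, exists g, nth_deriv_pos k f g /\ forall x, 0 < x -> g x = F k x.
Proof.
  intros Hf k. induction k as [|k IH].
  - exists f. split; [constructor | exact Hf].
  - destruct IH as [g [Hg Hgx]]. exists (F (S k)). split; [|auto].
    apply (nth_deriv_pos_S k f g (F (S k)) Hg).
    intros x Hx. apply (deriv_local (F k) g x); auto.
    intros y Hy; symmetry; auto.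
Qed.

Lemma thmB al be n z : P al be n z = (-1) ^ n * P (INR n - 1 - al) (- be) n z.
Proof.
  revert z. induction n as [|n IH]; intros z.
  - rewrite !P0. simpl. ring.
  - set (a' := INR n - 1 - al).
    assert (Heq : P al be n = fun w => (-1) ^ n * P a' (- be) n w) by (extensionality w; apply IH).
    assert (HdP : dP al be n z = (-1) ^ n * dP a' (- be) n z).
    { apply (uniqueness_limite (P al be n) z). apply dP_ok.
      rewrite Heq. apply d_scal. apply dP_ok. }
    rewrite R1. replace (INR (S n) - 1 - al) with (a' + 1) by (unfold a'; rewrite S_INR; ring).
    rewrite R2, IH, HdP. fold a'. unfold a'. simpl pow. ring.
Qed.

Theorem theorem1 :
  forall (alpha beta : R), beta <> 0 -> forall (n : nat),
    let f1 := fun x => Rpower x alpha * exp (Rpower x beta) in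
    let f2 := fun x => Rpower x (INR n - 1 - alpha) * exp (Rpower x (- beta)) in
    ((exists g, nth_deriv_pos n f1 g) /\
     (forall g, nth_deriv_pos n f1 g -> forall x, 0 < x ->
        P alpha beta n (Rpower x beta) =
        (-1) ^ n * Rpower x (INR n - alpha) * exp (- Rpower x beta) * g x)) /\
    ((exists g, nth_deriv_pos n f2 g) /\
     (forall g, nth_deriv_pos n f2 g -> forall x, 0 < x ->
        P alpha beta n (Rpower x (- beta)) =
        Rpower x (alpha + 1) * exp (- Rpower x (- beta)) * g x)).
Proof.
  intros al be _ n f1 f2.
  assert (Hf1 : forall x, 0 < x -> f1 x = Fk al be 0 x).
  { intros x Hx. unfold f1, Fk. rewrite P0. simpl INR. rewrite Rminus_0_r. simpl. ring. }
  assert (Hf2 : forall x, 0 < x -> f2 x = Fk (INR n - 1 - al) (- be) 0 x).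
  { intros x Hx. unfold f2, Fk. rewrite P0. simpl INR. rewrite Rminus_0_r. simpl. ring. }
  assert (sq : (-1) ^ n * (-1) ^ n = 1).
  { rewrite <- Rpow_mult_distr. replace (-1 * -1) with 1 by ring. apply pow1. }
  split; split.
  - destruct (chain_exists _ (F_deriv al be) f1 Hf1 n) as [g [Hg _]]. eauto.
  - intros g Hg x Hx. rewrite (chain_unique _ (F_deriv al be) n f1 g Hg Hf1 x Hx).
    unfold Fk. rewrite exp_Ropp.
    assert (Hp : Rpower x (INR n - al) * Rpower x (al - INR n) = 1).
    { rewrite <- Rpower_plus. replace (INR n - al + (al - INR n)) with 0 by ring. apply Rpower_O; exact Hx. }
    assert (exp (Rpower x be) <> 0) by (apply Rgt_not_eq, exp_pos).
    transitivity (((-1) ^ n * (-1) ^ n) * (Rpower x (INR n - al) * Rpower x (al - INR n)) * P al be n (Rpower x be)).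
    { rewrite sq, Hp. ring. }
    field. auto.
  - destruct (chain_exists _ (F_deriv (INR n - 1 - al) (- be)) f2 Hf2 n) as [g [Hg _]]. eauto.
  - intros g Hg x Hx. rewrite (chain_unique _ (F_deriv (INR n - 1 - al) (- be)) n f2 g Hg Hf2 x Hx).
    unfold Fk. rewrite exp_Ropp, thmB.
    assert (Hp : Rpower x (al + 1) * Rpower x (INR n - 1 - al - INR n) = 1).
    { rewrite <- Rpower_plus. replace (al + 1 + (INR n - 1 - al - INR n)) with 0 by ring. apply Rpower_O; exact Hx. }
    assert (exp (Rpower x (- be)) <> 0) by (apply Rgt_not_eq, exp_pos).
    transitivity (((-1) ^ n * P (INR n - 1 - al) (- be) n (Rpower x (- be))) * (Rpower x (al + 1) * Rpower x (INR n - 1 - al - INR n))).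
    { rewrite Hp. ring. }
    field. auto.
Qed.
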